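(* Let $p,q,n$ be positive integers, $\boldsymbol\Lambda$ a real $p\times q$ matrix, $\boldsymbol\Gamma$ a real $p\times p$ matrix with $\boldsymbol\Gamma\boldsymbol\Gamma'=\mathbf I_p-\boldsymbol\Lambda\boldsymbol\Lambda'$, $\mathbf Y,\hat{\mathbf Y}$ real $q\times n$ matrices and $\hat{\mathbf W}$ a real $p\times n$ matrix. For $t\in(0,1)$ set $\mathbf Y(t)=\sqrt t\,\mathbf Y+\sqrt{1-t}\,\hat{\mathbf Y}$, $\mathbf X(t)=\boldsymbol\Lambda\mathbf Y(t)+\boldsymbol\Gamma\hat{\mathbf W}$, and assume $\mathbf X(t)\mathbf X(t)'$ and $\mathbf Y(t)\mathbf Y(t)'$ are invertible. Let $\mathbf Q(t)=(\mathbf X(t)\mathbf X(t)')^{-1}\mathbf X(t)$, $\mathbf U(t)=(\mathbf Y(t)\mathbf Y(t)')^{-1}\mathbf Y(t)$, $\mathbf P_{x(t)}=\mathbf X(t)'\mathbf Q(t)$, $\mathbf P_{y(t)}=\mathbf Y(t)'\mathbf U(t)$, $\mathbf H(t)=\mathbf P_{x(t)}+\mathbf P_{y(t)}$, and for $z\in\mathbb C^+$ let $G=(\mathbf H(t)-z)^{-1}$. For $j\in\{1,\dots,q\}$, $i\in\{1,\dots,n\}$ define $$\Psi^1_{ji}=[\boldsymbol\Lambda'\mathbf Q(t)G^2(\mathbf I-\mathbf P_{x(t)})]_{ji},\qquad \Psi^2_{ji}=[\mathbf U(t)G^2(\mathbf I-\mathbf P_{y(t)})]_{ji},$$ viewed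 as functions of the entries of $\mathbf Y$ and $\hat{\mathbf Y}$. Then for $l=1,2$, $$\frac{1}{\sqrt{1-t}}\frac{\partial\Psi^l_{ji}}{\partial\hat Y_{ji}}=\frac{1}{\sqrt t}\frac{\partial\Psi^l_{ji}}{\partial Y_{ji}}.$$
   Context: In the paper this is used with $\mathbf Y$ having i.i.d. (scaled) entries of mean $0$, variance $1$, finite fourth moment, and $\hat{\mathbf Y},\hat{\mathbf W}$ independent with (scaled) standard Gaussian entries; the identity itself is pointwise. $\mathbf A'$ denotes transpose. *)

(* Defs.v *)
From HB Require Import structures.
From mathcomp Require Import all_boot all_order all_algebra.
From mathcomp Require Import all_classical all_reals all_analysis.
From mathcomp Require Import complex.
Set Implicit Arguments. Unset Strict Implicit. Unset Printing Implicit Defensive.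
Import Order.TTheory GRing.Theory Num.Theory.
Local Open Scope ring_scope.

Section Model.
Variables (R : realType) (p q n : nat).
Variables (Lam : 'M[R]_(p, q)) (Gam : 'M[R]_p) (What : 'M[R]_(p, n)).
Variables (t : R) (z : R[i]).

Definition mxC m k (A : 'M[R]_(m, k)) : 'M[R[i]]_(m, k) :=
  map_mx (fun x => (x%:C)%C) A.

Definition Yt (Y Yh : 'M[R]_(q, n)) : 'M[R]_(q, n) :=
  Num.sqrt t *: Y + Num.sqrt (1 - t) *: Yh.
Definition Xt (Y Yh : 'M[R]_(q, n)) : 'M[R]_(p, n) :=
  Lam *m Yt Y Yh + Gam *m What.
Definition Qt Y Yh : 'M[R]_(p, n) :=
  invmx (Xt Y Yh *m (Xt Y Yh)^T) *m Xt Y Yh.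
Definition Ut Y Yh : 'M[R]_(q, n) :=
  invmx (Yt Y Yh *m (Yt Y Yh)^T) *m Yt Y Yh.
Definition Px Y Yh : 'M[R]_n := (Xt Y Yh)^T *m Qt Y Yh.
Definition Py Y Yh : 'M[R]_n := (Yt Y Yh)^T *m Ut Y Yh.
Definition Ht Y Yh : 'M[R]_n := Px Y Yh + Py Y Yh.
Definition Gt Y Yh : 'M[R[i]]_n := invmx (mxC (Ht Y Yh) - z%:M).

Definition Psi1 Y Yh (j : 'I_q) (i : 'I_n) : R[i] :=
  (mxC (Lam^T *m Qt Y Yh) *m (Gt Y Yh *m Gt Y Yh) *m mxC (1%:M - Px Y Yh)) j i.
Definition Psi2 Y Yh (j : 'I_q) (i : 'I_n) : R[i] :=
  (mxC (Ut Y Yh) *m (Gt Y Yh *m Gt Y Yh) *m mxC (1%:M - Py Y Yh)) j i.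
End Model.

Definition has_cderiv (R : realType) (f : R -> R[i]) (x : R) (d : R[i]) :=
  is_derive x 1 (fun s => complex.Re (f s)) (complex.Re d) /\
  is_derive x 1 (fun s => complex.Im (f s)) (complex.Im d).

(* Main.v *)
Require Import Defs.
From HB Require Import structures.
From mathcomp Require Import all_boot all_order all_algebra.
From mathcomp Require Import all_classical all_reals all_analysis.
From mathcomp Require Import complex.
Import Order.TTheory GRing.Theory Num.Theory.
Import numFieldNormedType.Exports.
Local Open Scope ring_scope.
Set Implicit Arguments. Unset Strict Implicit. Unset Printing Implicit Defensive.

Section Gen.
Variables (R : realType) (K : fieldType) (P : (R -> K) -> Prop).
Hypothesis Pc : forall c, P (fun _ => c).
Hypothesis PD : forall f g, P f -> P g -> P (fun s => f s + g s).
Hypothesis PM : forall f g, P f -> P g -> P (fun s => f s * g s).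

Lemma Pext f g : P f -> (forall s, f s = g s) -> P g.
Proof using. by move=> H /funext <-. Qed.

Lemma Psum (I : Type) (r : seq I) (Q : pred I) (F : I -> R -> K) :
  (forall i, P (F i)) -> P (fun s => \sum_(i <- r | Q i) F i s).
Proof using Pc PD PM.
move=> HF; elim: r => [|a r IH].
  by apply: (Pext (Pc 0)) => s; rewrite big_nil.
case Qa: (Q a).
  by apply: (Pext (PD (HF a) IH)) => s; rewrite big_cons Qa.
by apply: (Pext IH) => s; rewrite big_cons Qa.
Qed.

Lemma Pprod (I : Type) (r : seq I) (Q : pred I) (F : I -> R -> K) :
  (forall i, P (F i)) -> P (fun s => \prod_(i <- r | Q i) F i s).
Proof using Pc PD PM.
move=> HF; elim: r => [|a r IH].
  by apply: (Pext (Pc 1)) => s; rewrite big_nil.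
case Qa: (Q a).
  by apply: (Pext (PM (HF a) IH)) => s; rewrite big_cons Qa.
by apply: (Pext IH) => s; rewrite big_cons Qa.
Qed.

Definition MP m n (A : R -> 'M[K]_(m, n)) := forall i j, P (fun s => A s i j).

Lemma MP_const m n (C : 'M[K]_(m, n)) : MP (fun _ => C).
Proof using Pc PD PM. by move=> i j; apply: Pc. Qed.

Lemma MP_add m n (A B : R -> 'M[K]_(m, n)) : MP A -> MP B -> MP (fun s => A s + B s).
Proof using Pc PD PM. by move=> HA HB i j; apply: (Pext (PD (HA i j) (HB i j))) => s; rewrite mxE. Qed.

Lemma MP_opp m n (A : R -> 'M[K]_(m, n)) : MP A -> MP (fun s => - A s).
Proof using Pc PD PM. by move=> HA i j; apply: (Pext (PM (Pc (-1)) (HA i j))) => s; rewrite mxE mulN1r. Qed.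

Lemma MP_scale m n c (A : R -> 'M[K]_(m, n)) : MP A -> MP (fun s => c *: A s).
Proof using Pc PD PM. by move=> HA i j; apply: (Pext (PM (Pc c) (HA i j))) => s; rewrite mxE. Qed.

Lemma MP_tr m n (A : R -> 'M[K]_(m, n)) : MP A -> MP (fun s => (A s)^T).
Proof using Pc PD PM. by move=> HA i j; apply: (Pext (HA j i)) => s; rewrite mxE. Qed.

Lemma MP_mul m n k (A : R -> 'M[K]_(m, n)) (B : R -> 'M[K]_(n, k)) :
  MP A -> MP B -> MP (fun s => A s *m B s).
Proof using Pc PD PM.
move=> HA HB i j.
have H : P (fun s => \sum_l A s i l * B s l j) by apply: Psum => l; apply: PM.
by apply: (Pext H) => s; rewrite mxE.
Qed.

Lemma P_det n (A : R -> 'M[K]_n) : MP A -> P (fun s => \det (A s)).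
Proof using Pc PD PM.
move=> HA; apply: Psum => sg; apply: PM => //; apply: Pprod => l; exact: HA.
Qed.

Lemma MP_adj n (A : R -> 'M[K]_n) : MP A -> MP (fun s => \adj (A s)).
Proof using Pc PD PM.
move=> HA i j.
have H : P (fun s => (-1) ^+ (j + i) * \det (row' j (col' i (A s)))).
  apply: PM => //; apply: P_det => a b; apply: (Pext (HA _ _)) => s; rewrite !mxE.
  reflexivity.
by apply: (Pext H) => s; rewrite mxE.
Qed.

Hypothesis PV : forall f, P f -> f 0 != 0 -> P (fun s => (f s)^-1).
Hypothesis Pnear : forall f g, P f -> (\forall s \near (0 : R), f s = g s) -> P g.
Hypothesis Pcont : forall f, P f -> f 0 != 0 -> \forall s \near (0 : R), f s != 0.

Lemma MP_inv n (A : R -> 'M[K]_n) : MP A -> A 0 \in unitmx -> MP (fun s => invmx (A s)).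
Proof using Pc PD PM PV Pnear Pcont.
move=> HA HU i j.
have Pd := P_det HA.
have d0 : \det (A 0) != 0 by rewrite -unitfE -unitmxE.
have H : P (fun s => (\det (A s))^-1 * \adj (A s) i j).
  by apply: PM; [apply: PV|apply: MP_adj].
apply: (Pnear H).
apply: filterS (Pcont Pd d0) => s ds.
by rewrite /invmx unitmxE unitfE ds [in RHS]mxE.
Qed.
End Gen.
Section RealP.
Variable R : realType.
Definition RD (f : R -> R) := derivable f 0 1.

Lemma RDc c : RD (fun _ => c).
Proof. exact: derivable_cst. Qed.
Lemma RDid : RD (fun s => s).
Proof. exact: derivable_id. Qed.
Lemma RDD f g : RD f -> RD g -> RD (fun s => f s + g s).
Proof. move=> Hf Hg; exact: (derivableD Hf Hg). Qed.
Lemma RDM f g : RD f -> RD g -> RD (fun s => f s * g s).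
Proof. move=> Hf Hg; exact: (derivableM Hf Hg). Qed.
Lemma RDV f : RD f -> f 0 != 0 -> RD (fun s => (f s)^-1).
Proof. move=> Hf H0; exact: (derivableV H0 Hf). Qed.
Lemma RDnear f g : RD f -> (\forall s \near (0 : R), f s = g s) -> RD g.
Proof. move=> Hf H; exact: near_eq_derivable H Hf. Qed.
Lemma RDcont f : RD f -> f 0 != 0 -> \forall s \near (0 : R), f s != 0.
Proof.
move=> Hf H0.
have fc : {for 0, continuous f}.
  by apply: differentiable_continuous; apply/derivable1_diffP.
have N : nbhs (f 0) (fun x : R => x != 0).
  exists `|f 0|; first by rewrite /= normr_gt0.
  move=> y; rewrite /= => yltfx.
  by apply/eqP => y0; move: yltfx; rewrite y0 subr0 ltxx.
exact: (fc _ N).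
Qed.
End RealP.
Section CplxP.
Variable R : realType.
Local Notation Re := (@complex.Re R).
Local Notation Im := (@complex.Im R).
Definition CD (f : R -> R[i]) := RD (fun s => Re (f s)) /\ RD (fun s => Im (f s)).

Lemma ReD (x y : R[i]) : Re (x + y) = Re x + Re y. Proof. by case: x; case: y. Qed.
Lemma ImD (x y : R[i]) : Im (x + y) = Im x + Im y. Proof. by case: x; case: y. Qed.
Lemma ReM (x y : R[i]) : Re (x * y) = Re x * Re y - Im x * Im y. Proof. by case: x; case: y. Qed.
Lemma ImM (x y : R[i]) : Im (x * y) = Re x * Im y + Im x * Re y. Proof. by case: x => a b; case: y => c d /=; rewrite addrC. Qed.
Lemma ReV (x : R[i]) : Re (x^-1) = Re x * (Re x ^+ 2 + Im x ^+ 2)^-1. Proof. by case: x. Qed.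
Lemma ImV (x : R[i]) : Im (x^-1) = - Im x * (Re x ^+ 2 + Im x ^+ 2)^-1. Proof. by case: x => a b /=; rewrite ?mulNr. Qed.

Lemma RDext (f g : R -> R) : RD f -> (forall s, f s = g s) -> RD g.
Proof. by move=> H /funext <-. Qed.
Lemma RDN (f : R -> R) : RD f -> RD (fun s => - f s).
Proof. move=> H; apply: (RDext (RDM (@RDc R (-1)) H)) => s; by rewrite mulN1r. Qed.

Lemma CDc (c : R[i]) : CD (fun _ => c).
Proof. split; exact: RDc. Qed.
Lemma CDD (f g : R -> R[i]) : CD f -> CD g -> CD (fun s => f s + g s).
Proof.
move=> [H1 H2] [H3 H4]; split.
  by apply: (RDext (RDD H1 H3)) => s; rewrite ReD.
by apply: (RDext (RDD H2 H4)) => s; rewrite ImD.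
Qed.
Lemma CDM (f g : R -> R[i]) : CD f -> CD g -> CD (fun s => f s * g s).
Proof.
move=> [H1 H2] [H3 H4]; split.
  by apply: (RDext (RDD (RDM H1 H3) (RDN (RDM H2 H4)))) => s; rewrite ReM.
by apply: (RDext (RDD (RDM H1 H4) (RDM H2 H3))) => s; rewrite ImM.
Qed.
Lemma normsq_neq0 (x : R[i]) : x != 0 -> Re x ^+ 2 + Im x ^+ 2 != 0.
Proof.
case: x => a b /= H; apply/negP; rewrite paddr_eq0 ?sqr_ge0 // !sqrf_eq0.
by case/andP => /eqP a0 /eqP b0; move: H; rewrite a0 b0 eqxx.
Qed.
Lemma CDV (f : R -> R[i]) : CD f -> f 0 != 0 -> CD (fun s => (f s)^-1).
Proof.
move=> [H1 H2] H0.
have Hn : RD (fun s => Re (f s) ^+ 2 + Im (f s) ^+ 2).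
  by apply: RDD; rewrite /GRing.exp /=; apply: RDM.
have Hv := RDV Hn (normsq_neq0 H0).
split.
  by apply: (RDext (RDM H1 Hv)) => s; rewrite ReV.
by apply: (RDext (RDM (RDN H2) Hv)) => s; rewrite ImV.
Qed.
Lemma CDnear (f g : R -> R[i]) : CD f -> (\forall s \near (0 : R), f s = g s) -> CD g.
Proof.
move=> [H1 H2] H; split.
  by apply: (RDnear H1); apply: filterS H => s ->.
by apply: (RDnear H2); apply: filterS H => s ->.
Qed.
Lemma CDcont (f : R -> R[i]) : CD f -> f 0 != 0 -> \forall s \near (0 : R), f s != 0.
Proof.
move=> [H1 H2] H0.
have [r0|r0] := eqVneq (Re (f 0)) 0.
  have i0 : Im (f 0) != 0.
    by apply/eqP => i0; move: H0; case: (f 0) r0 i0 => a b /= -> ->; rewrite eqxx.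
  by apply: filterS (RDcont H2 i0) => s; apply: contra => /eqP ->.
by apply: filterS (RDcont H1 r0) => s; apply: contra => /eqP ->.
Qed.
Lemma CDreal (f : R -> R) : RD f -> CD (fun s => (f s)%:C%C).
Proof. by move=> H; split; [exact: H | exact: (@RDc R 0)]. Qed.
End CplxP.
Section Herm.
Variable R : realType.
Local Notation Im := (@complex.Im R).

Lemma map_conj_mxC m k (A : 'M[R]_(m, k)) : map_mx conjc (mxC A) = mxC A.
Proof. by apply/matrixP => a b; rewrite !mxE conjc_real. Qed.

Lemma map_conjK m k (A : 'M[R[i]]_(m, k)) : map_mx conjc (map_mx conjc A) = A.
Proof. by apply/matrixP => a b; rewrite !mxE conjcK. Qed.

Lemma conj_entry m k (A : 'M[R[i]]_(m, k)) a b : conjc (A a b) = (map_mx conjc A) a b.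
Proof. by rewrite [RHS]mxE. Qed.

Lemma conjcM' (x y : R[i]) : conjc (x * y) = conjc x * conjc y.
Proof. exact: rmorphM. Qed.

Lemma tr00 (X : 'M[R[i]]_1) : X 0 0 = X^T 0 0.
Proof. by rewrite [RHS]mxE. Qed.

Lemma herm_unit n (H : 'M[R]_n) (z : R[i]) : H^T = H -> 0 < Im z ->
  mxC H - z%:M \in unitmx.
Proof.
move=> HT zpos.
set M := mxC H - z%:M.
case: (boolP (M \in unitmx)) => // nU; exfalso.
have kn0 : kermx M != 0 by rewrite kermx_eq0 row_free_unit.
have [k vk] : exists k, row k (kermx M) != 0.
  apply/existsP; move: kn0; apply: contraR; rewrite negb_exists => /forallP A0.
  by apply/eqP/row_matrixP => k; rewrite row0; apply/eqP; move: (A0 k); rewrite negbK.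
have [v vk' vM] : exists2 v : 'rV_n, v != 0 & v *m M = 0.
  by exists (row k (kermx M)) => //; rewrite -row_mul mulmx_ker row0.
clear vk; move: vk' => vk.
have vH : v *m mxC H = z *: v.
  by apply/eqP; rewrite -subr_eq0 -mul_mx_scalar -mulmxBr vM.
set w := (map_mx conjc v)^T.
have HCT : (mxC H)^T = mxC H by rewrite /mxC map_trmx HT.
have S1 : (v *m mxC H *m w) 0 0 = z * (v *m w) 0 0.
  by rewrite vH -scalemxAl mxE.
have S2 : conjc ((v *m mxC H *m w) 0 0) = (v *m mxC H *m w) 0 0.
  rewrite conj_entry !map_mxM map_conj_mxC /w map_trmx map_conjK tr00.
  by rewrite !trmx_mul trmxK HCT mulmxA map_trmx.
have S3 : conjc ((v *m w) 0 0) = (v *m w) 0 0.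
  by rewrite conj_entry !map_mxM /w map_trmx map_conjK tr00 !trmx_mul trmxK map_trmx.
have r0 : (v *m w) 0 0 != 0.
  apply: contra vk => /eqP r0; apply/eqP/rowP => a; rewrite [RHS]mxE.
  move: r0; rewrite mxE => /psumr_eq0P H0.
  have : v 0 a * conjc (v 0 a) = 0.
    have := H0 _ a isT; rewrite /w !mxE; apply => c _; rewrite !mxE; exact: mulcJ_ge0.
  by move/eqP; rewrite mulf_eq0 conjc_eq0 orbb => /eqP.
have zc : conjc z = z.
  move: S2; rewrite S1 conjcM' S3 => /eqP; rewrite -subr_eq0 -mulrBl mulf_eq0 (negbTE r0) orbF subr_eq0.
  by move/eqP.
clear -zpos zc; move: zpos zc; case: z => a b /= bpos [] /eqP.
rewrite -subr_eq0 -opprD oppr_eq0 -mulr2n mulrn_eq0 /=.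
by move/eqP => b0; move: bpos; rewrite b0 ltxx.
Qed.
End Herm.
Section Spec.
Variable R : realType.
Definition RMP := @MP R R (@RD R).
Definition CMP := @MP R (R[i]) (@CD R).
Definition RMP_const := @MP_const _ _ _ (@RDc R) (@RDD R) (@RDM R).
Definition RMP_add := @MP_add _ _ _ (@RDc R) (@RDD R) (@RDM R).
Definition RMP_opp := @MP_opp _ _ _ (@RDc R) (@RDD R) (@RDM R).
Definition RMP_scale := @MP_scale _ _ _ (@RDc R) (@RDD R) (@RDM R).
Definition RMP_tr := @MP_tr _ _ _ (@RDc R) (@RDD R) (@RDM R).
Definition RMP_mul := @MP_mul _ _ _ (@RDc R) (@RDD R) (@RDM R).
Definition RMP_inv := @MP_inv _ _ _ (@RDc R) (@RDD R) (@RDM R) (@RDV R) (@RDnear R) (@RDcont R).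
Definition CMP_const := @MP_const _ _ _ (@CDc R) (@CDD R) (@CDM R).
Definition CMP_add := @MP_add _ _ _ (@CDc R) (@CDD R) (@CDM R).
Definition CMP_opp := @MP_opp _ _ _ (@CDc R) (@CDD R) (@CDM R).
Definition CMP_mul := @MP_mul _ _ _ (@CDc R) (@CDD R) (@CDM R).
Definition CMP_inv := @MP_inv _ _ _ (@CDc R) (@CDD R) (@CDM R) (@CDV R) (@CDnear R) (@CDcont R).

Lemma CMP_mxC m k (A : R -> 'M[R]_(m, k)) : RMP A -> CMP (fun s => mxC (A s)).
Proof.
move=> HA a b; apply: (@Pext R (R[i]) (@CD R) _ _ (CDreal (HA a b))) => s.
by rewrite mxE.
Qed.
End Spec.
Section Main.
Variables (R : realType) (p q n : nat).
Variables (Lam : 'M[R]_(p, q)) (Gam : 'M[R]_p) (What : 'M[R]_(p, n)).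
Variables (t : R) (z : R[i]) (Y Yh : 'M[R]_(q, n)) (j : 'I_q) (i : 'I_n).
Hypothesis hX : Xt Lam Gam What t Y Yh *m (Xt Lam Gam What t Y Yh)^T \in unitmx.
Hypothesis hY : Yt t Y Yh *m (Yt t Y Yh)^T \in unitmx.
Hypothesis hz : 0 < complex.Im z.

Lemma Px_sym (A B : 'M[R]_(q, n)) : (Px Lam Gam What t A B)^T = Px Lam Gam What t A B.
Proof. by rewrite /Px /Qt !trmx_mul trmxK trmx_inv trmx_mul trmxK mulmxA. Qed.
Lemma Py_sym (A B : 'M[R]_(q, n)) : (Py t A B)^T = Py t A B.
Proof. by rewrite /Py /Ut !trmx_mul trmxK trmx_inv trmx_mul trmxK mulmxA. Qed.
Lemma Ht_sym (A B : 'M[R]_(q, n)) : (Ht Lam Gam What t A B)^T = Ht Lam Gam What t A B.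
Proof. by rewrite /Ht linearD /= Px_sym Py_sym. Qed.

Let E := delta_mx j i : 'M[R]_(q, n).

Lemma MYs : RMP (fun s => Yt t (Y + s *: E) Yh).
Proof.
rewrite /Yt; apply: RMP_add; last exact: RMP_const.
apply: RMP_scale; apply: RMP_add; first exact: RMP_const.
move=> a b; apply: (@Pext R R (@RD R) _ _ (RDM (@RDid R) (@RDc R (E a b)))) => s.
by rewrite [RHS]mxE.
Qed.

Lemma MXs : RMP (fun s => Xt Lam Gam What t (Y + s *: E) Yh).
Proof.
rewrite /Xt; apply: RMP_add; last exact: RMP_const.
apply: RMP_mul; [exact: RMP_const | exact: MYs].
Qed.

Lemma MQs : RMP (fun s => Qt Lam Gam What t (Y + s *: E) Yh).
Proof.
rewrite /Qt; apply: RMP_mul; last exact: MXs.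
apply: RMP_inv; first by apply: RMP_mul; [exact: MXs | apply: RMP_tr; exact: MXs].
by rewrite /= scale0r addr0.
Qed.

Lemma MUs : RMP (fun s => Ut t (Y + s *: E) Yh).
Proof.
rewrite /Ut; apply: RMP_mul; last exact: MYs.
apply: RMP_inv; first by apply: RMP_mul; [exact: MYs | apply: RMP_tr; exact: MYs].
by rewrite /= scale0r addr0.
Qed.

Lemma MPx : RMP (fun s => Px Lam Gam What t (Y + s *: E) Yh).
Proof. rewrite /Px; apply: RMP_mul; [apply: RMP_tr; exact: MXs | exact: MQs]. Qed.
Lemma MPy : RMP (fun s => Py t (Y + s *: E) Yh).
Proof. rewrite /Py; apply: RMP_mul; [apply: RMP_tr; exact: MYs | exact: MUs]. Qed.

Lemma MGs : CMP (fun s => Gt Lam Gam What t z (Y + s *: E) Yh).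
Proof.
rewrite /Gt; apply: CMP_inv.
  apply: CMP_add; last by apply: CMP_opp; exact: CMP_const.
  apply: CMP_mxC; rewrite /Ht; apply: RMP_add; [exact: MPx | exact: MPy].
rewrite /= scale0r addr0; apply: herm_unit => //; exact: Ht_sym.
Qed.

Lemma CD1 : CD (fun s => Psi1 Lam Gam What t z (Y + s *: E) Yh j i).
Proof.
have H : CMP (fun s => mxC (Lam^T *m Qt Lam Gam What t (Y + s *: E) Yh) *m
   (Gt Lam Gam What t z (Y + s *: E) Yh *m Gt Lam Gam What t z (Y + s *: E) Yh) *m
   mxC (1%:M - Px Lam Gam What t (Y + s *: E) Yh)).
  apply: CMP_mul; first apply: CMP_mul.
  - by apply: CMP_mxC; apply: RMP_mul; [exact: RMP_const | exact: MQs].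
  - by apply: CMP_mul; exact: MGs.
  - apply: CMP_mxC; apply: RMP_add; [exact: RMP_const | apply: RMP_opp; exact: MPx].
exact: (H j i).
Qed.

Lemma CD2 : CD (fun s => Psi2 Lam Gam What t z (Y + s *: E) Yh j i).
Proof.
have H : CMP (fun s => mxC (Ut t (Y + s *: E) Yh) *m
   (Gt Lam Gam What t z (Y + s *: E) Yh *m Gt Lam Gam What t z (Y + s *: E) Yh) *m
   mxC (1%:M - Py t (Y + s *: E) Yh)).
  apply: CMP_mul; first apply: CMP_mul.
  - by apply: CMP_mxC; exact: MUs.
  - by apply: CMP_mul; exact: MGs.
  - apply: CMP_mxC; apply: RMP_add; [exact: RMP_const | apply: RMP_opp; exact: MPy].
exact: (H j i).
Qed.
End Main.
Lemma lin (R : realType) (c : R) : 'D_1 (fun s : R => c * s) 0 = c.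
Proof.
have := @deriveMl R R^o id c 0 1 (@derivable_id R R^o 0 1).
rewrite derive_id mulr1. exact.
Qed.

Lemma chain_scale (R : realType) (g : R -> R) (c : R) :
  derivable g 0 1 -> is_derive (0:R) (1:R) (fun s => g (c * s)) (c * 'D_1 g 0).
Proof.
move=> dg.
have dl : derivable (fun s : R => c * s) 0 1 by apply: RDM; [exact: RDc | exact: RDid].
have e0 : c * 0 = 0 by rewrite mulr0.
have dg' : derivable g ((fun s : R => c * s) 0) 1.
  exact: (eq_ind_r (fun x => derivable g x 1) dg e0).
have dgf : derivable (g \o (fun s : R => c * s)) 0 1.
  apply/derivable1_diffP; exact: (differentiable_comp ((derivable1_diffP _ _).1 dl) ((derivable1_diffP _ _).1 dg')).
change (is_derive (0:R) (1:R) (g \o (fun s : R => c * s)) (c * 'D_1 g 0)).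
apply: DeriveDef => //.
have := derive1_comp dl dg'; rewrite !derive1E => ->.
by rewrite lin e0 mulrC.
Qed.
Section Eqs.
Variables (R : realType) (p q n : nat) (Lam : 'M[R]_(p, q)) (Gam : 'M[R]_p)
  (What : 'M[R]_(p, n)) (t : R) (z : R[i]) (A B A' B' : 'M[R]_(q, n)).
Hypothesis H : Yt t A B = Yt t A' B'.
Lemma Xt_eq : Xt Lam Gam What t A B = Xt Lam Gam What t A' B'.
Proof. by rewrite /Xt H. Qed.
Lemma Qt_eq : Qt Lam Gam What t A B = Qt Lam Gam What t A' B'.
Proof. by rewrite /Qt Xt_eq. Qed.
Lemma Px_eq : Px Lam Gam What t A B = Px Lam Gam What t A' B'.
Proof. by rewrite /Px Xt_eq Qt_eq. Qed.
Lemma Ut_eq : Ut t A B = Ut t A' B'.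
Proof. by rewrite /Ut H. Qed.
Lemma Py_eq : Py t A B = Py t A' B'.
Proof. by rewrite /Py Ut_eq H. Qed.
Lemma Gt_eq : Gt Lam Gam What t z A B = Gt Lam Gam What t z A' B'.
Proof. by rewrite /Gt /Ht Px_eq Py_eq. Qed.
Lemma Psi1_eq j i : Psi1 Lam Gam What t z A B j i = Psi1 Lam Gam What t z A' B' j i.
Proof. by rewrite /Psi1 Qt_eq Gt_eq Px_eq. Qed.
Lemma Psi2_eq j i : Psi2 Lam Gam What t z A B j i = Psi2 Lam Gam What t z A' B' j i.
Proof. by rewrite /Psi2 Ut_eq Gt_eq Py_eq. Qed.
End Eqs.
Lemma rcM (R : realType) (x y : R) : (x%:C * y%:C)%C = ((x * y)%:C)%C :> R[i].
Proof. by rewrite [RHS]rmorphM. Qed.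

Unset Implicit Arguments.

Theorem lemma6p4 (R : realType) (p q n : nat)
  (hp : (0 < p)%N) (hq : (0 < q)%N) (hn : (0 < n)%N)
  (Lam : 'M[R]_(p, q)) (Gam : 'M[R]_p)
  (hGam : Gam *m Gam^T = 1%:M - Lam *m Lam^T)
  (Y Yh : 'M[R]_(q, n)) (What : 'M[R]_(p, n))
  (t : R) (ht : 0 < t < 1)
  (hX : Xt Lam Gam What t Y Yh *m (Xt Lam Gam What t Y Yh)^T \in unitmx)
  (hY : Yt t Y Yh *m (Yt t Y Yh)^T \in unitmx)
  (z : R[i]) (hz : 0 < complex.Im z)
  (j : 'I_q) (i : 'I_n) :
  (forall Psi : 'M[R]_(q, n) -> 'M[R]_(q, n) -> R[i],
     Psi = (fun A B => Psi1 Lam Gam What t z A B j i) \/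
     Psi = (fun A B => Psi2 Lam Gam What t z A B j i) ->
   exists dYh dY : R[i],
     has_cderiv (fun s : R => Psi Y (Yh + s *: delta_mx j i)) 0 dYh /\
     has_cderiv (fun s : R => Psi (Y + s *: delta_mx j i) Yh) 0 dY /\
     ((Num.sqrt (1 - t))^-1)%:C%C * dYh = ((Num.sqrt t)^-1)%:C%C * dY).
Proof.
move=> Psi HPsi.
case/andP: ht => ht0 ht1.
have st0 : Num.sqrt t != 0 by rewrite gt_eqF // sqrtr_gt0.
have s1t0 : Num.sqrt (1 - t) != 0 by rewrite gt_eqF // sqrtr_gt0 subr_gt0.
set c := Num.sqrt (1 - t) / Num.sqrt t.
set E := delta_mx j i.
have HYt : forall s, Yt t Y (Yh + s *: E) = Yt t (Y + (c * s) *: E) Yh.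
  move=> s; rewrite /Yt !scalerDr !scalerA.
  have -> : Num.sqrt t * (c * s) = Num.sqrt (1 - t) * s.
    by rewrite /c mulrA mulrCA mulfV // mulr1.
  by rewrite addrAC -addrA.
have Heq : forall s, Psi Y (Yh + s *: E) = Psi (Y + (c * s) *: E) Yh.
  by move=> s; case: HPsi => ->; [exact: Psi1_eq | exact: Psi2_eq].
have [Hre Him] : CD (fun s => Psi (Y + s *: E) Yh).
  by case: HPsi => ->; [exact: CD1 | exact: CD2].
set f2 := fun s => Psi (Y + s *: E) Yh.
set dY := Complex ('D_1 (fun s => complex.Re (f2 s)) 0) ('D_1 (fun s => complex.Im (f2 s)) 0).
exists ((c%:C)%C * dY), dY; split; last split.
- split.
  + have -> : (fun s => complex.Re (Psi Y (Yh + s *: E))) = (fun s => (fun s => complex.Re (f2 s)) (c * s)).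
      by apply/funext => s; rewrite Heq.
    have -> : complex.Re (c%:C%C * dY) = c * 'D_1 (fun s => complex.Re (f2 s)) 0.
      by rewrite /dY /= mul0r subr0.
    exact: chain_scale.
  + have -> : (fun s => complex.Im (Psi Y (Yh + s *: E))) = (fun s => (fun s => complex.Im (f2 s)) (c * s)).
      by apply/funext => s; rewrite Heq.
    have -> : complex.Im (c%:C%C * dY) = c * 'D_1 (fun s => complex.Im (f2 s)) 0.
      by rewrite /dY /= mul0r addr0.
    exact: chain_scale.
- by split; apply: derivableP.
- by rewrite mulrA rcM /c mulrA mulVf // mul1r.
Qed.
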